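(* If $G$ is a trigraph with $\operatorname{stww}(G)>\Delta(G)^2$, then $\operatorname{stww}(G)=\operatorname{tww}(G)$.
   Context: A trigraph is a finite simple graph whose edges are each colored red or black; a graph is viewed as a trigraph with all edges black. $\Delta(G)$ denotes the maximum degree of the underlying graph (edges of both colors counted). The red degree of a vertex is the number of red edges incident to it. For a partition $\mathcal{P}$ of $V(G)$, the quotient trigraph $G/\mathcal{P}$ has vertex set $\mathcal{P}$; two distinct parts $U,W$ are joined by a black edge if every pair $\{u,w\}$ with $u\in U,w\in W$ is a black edge of $G$, are non-adjacent if no such pair is an edge, and are joined by a red edge otherwise. A contraction sequence of an $n$-vertex trigraph $G$ is a sequence $\mathcal{P}_n,\dots,\mathcal{P}_1$ of partitions of $V(G)$ where $\mathcal{P}_n$ is the partition into singletons and each $\mathcal{P}_i$ arises from $\mathcal{P}_{i+1}$ by merging two parts; its width is the maximum red degree over all $G/\mathcal{P}_i$, and $\operatorname{tww}(G)$ is the minimum width of a contraction sequence. The sparse twin-width is $\operatorname{stww}(G)\coloneqq\operatorname{tww}(G_{\mathrm{red}})$, where $G_{\mathrm{red}}$ is obtained from $G$ by coloring all edges red. *)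

(* Defs.v *)
From mathcomp Require Import all_boot.
Set Implicit Arguments. Unset Strict Implicit. Unset Printing Implicit Defensive.

Definition is_trigraph (T : finType) (b r : rel T) : Prop :=
  [/\ symmetric b, symmetric r, irreflexive b, irreflexive r &
      forall x y, ~~ (b x y && r x y)].

Section TwinWidth.
Variables (T : finType) (b r : rel T).

Definition adj (x y : T) : bool := b x y || r x y.

Definition maxdeg : nat := \max_(x : T) #|[set y | adj x y]|.

(* parts U, W of a partition are joined by a red edge in G/P *)
Definition qred (U W : {set T}) : bool :=
  ~~ [forall u in U, forall w in W, b u w] &&
  [exists u in U, exists w in W, adj u w].

Definition reddeg (P : {set {set T}}) (U : {set T}) : nat :=
  #|[set W in P | (W != U) && qred U W]|.

Definition pwidth (P : {set {set T}}) : nat := \max_(U in P) reddeg P U.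

Definition singletons : {set {set T}} := [set [set x] | x : T].

Definition merge_step (P Q : {set {set T}}) : bool :=
  [exists U in P, exists W in P,
     (U != W) && (Q == (P :\ U :\ W) :|: [set U :|: W])].

(* A contraction sequence P_n, ..., P_1 (n = #|T|) is stored as the tuple
   s = [P_n; P_{n-1}; ...; P_1]. *)
Definition is_contraction_seq (s : #|T|.-tuple {set {set T}}) : bool :=
  [forall i : 'I_#|T|,
     if i == 0 :> nat then tnth s i == singletons
     else merge_step (nth set0 s i.-1) (tnth s i)].

Definition seq_width (s : #|T|.-tuple {set {set T}}) : nat :=
  \max_(i < #|T|) pwidth (tnth s i).

(* twin-width: minimum width over all contraction sequences.  The neutral
   element #|T| is a harmless upper bound (red degrees are < #|T|). *)
Definition tww : nat :=
  \big[minn/#|T|]_(s : #|T|.-tuple {set {set T}} | is_contraction_seq s)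
     seq_width s.

End TwinWidth.

Definition stww (T : finType) (b r : rel T) : nat :=
  tww (fun _ _ => false) (adj b r).

(* Main.v *)
Require Import Defs.
From mathcomp Require Import all_boot.
From mathcomp Require Import zify.

Section Proof.
Variables (T : finType) (b r : rel T).
Hypothesis Hb : symmetric b.

Let br := (fun _ _ : T => false).
Let rr := adj b r.
Let D := maxdeg b r.

Lemma qredRE U W : qred br rr U W = [exists u in U, exists w in W, adj b r u w].
Proof.
rewrite /qred; case E: [exists u in U, exists w in W, adj b r u w]; last by rewrite andbF.
rewrite andbT; move/existsP: E => [u /andP[uU /existsP[w /andP[wW _]]]].
apply/negP => /forallP /(_ u) /implyP /(_ uU) /forallP /(_ w) /implyP /(_ wW).
done.
Qed.

Lemma qred_sub U W : qred b r U W -> qred br rr U W.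
Proof. by rewrite qredRE => /andP[_ ->]. Qed.

Lemma reddeg_le P U : reddeg b r P U <= reddeg br rr P U.
Proof.
apply: subset_leq_card; apply/subsetP => W; rewrite !inE.
by move=> /andP[-> /andP[-> q]] /=; apply: qred_sub.
Qed.

Lemma pwidth_le P : pwidth b r P <= pwidth br rr P.
Proof.
apply: (big_ind2 (fun x y => x <= y)) => //; first by move=> *; lia.
by move=> U _; apply: reddeg_le.
Qed.

Lemma seq_width_le s : seq_width b r s <= seq_width br rr s.
Proof.
apply: (big_ind2 (fun x y => x <= y)) => //; first by move=> *; lia.
by move=> i _; apply: pwidth_le.
Qed.

Lemma tww_le : tww b r <= stww b r.
Proof.
apply: (big_ind2 (fun x y => x <= y)) => //; first by move=> *; lia.
by move=> s _; apply: seq_width_le.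
Qed.

Lemma merge_triv (P Q : {set {set T}}) : trivIset P -> merge_step P Q -> trivIset Q.
Proof.
move=> /trivIsetP tP /existsP[U /andP[UP /existsP[W /andP[WP /andP[UW /eqP->]]]]].
have dj : forall A, A \in P -> A != U -> A != W -> [disjoint A & U :|: W].
  move=> A AP AU AW; have d1 := tP A U AP UP AU; have d2 := tP A W AP WP AW.
  rewrite -setI_eq0 setIUr; rewrite -setI_eq0 in d1; rewrite -setI_eq0 in d2.
  by rewrite (eqP d1) (eqP d2) setU0.
apply/trivIsetP => A B; rewrite !inE => hA hB AB.
move: hA hB AB => /orP[/and3P[AW AU AP] | /eqP->] /orP[/and3P[BW BU BP] | /eqP->] AB.
- exact: tP.
- exact: dj.
- by rewrite disjoint_sym; apply: dj.
- by rewrite eqxx in AB.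
Qed.

Lemma singletons_triv : trivIset (singletons T).
Proof.
apply/trivIsetP => A B /imsetP[x _ ->] /imsetP[y _ ->] AB.
rewrite -setI_eq0; apply/eqP/setP => z; rewrite !inE.
apply/negP => /andP[/eqP zx /eqP zy]; by move: AB; rewrite -zx -zy eqxx.
Qed.

Lemma seq_triv s : is_contraction_seq s -> forall i : 'I_#|T|, trivIset (tnth s i).
Proof.
move=> /forallP H.
suff K : forall k, k < #|T| -> trivIset (nth set0 s k).
  by move=> i; rewrite (tnth_nth set0); apply: K.
elim=> [|k IH] hk.
  have := H (Ordinal hk); rewrite /= (tnth_nth set0) /= => /eqP ->.
  exact: singletons_triv.
have := H (Ordinal hk); rewrite /= (tnth_nth set0) /= => M.
apply: merge_triv M; apply: IH; lia.
Qed.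

Lemma card_bigcup_le (A : {set T}) (F : T -> {set T}) :
  #|\bigcup_(u in A) F u| <= \sum_(u in A) #|F u|.
Proof.
apply: (big_ind2 (fun (X : {set T}) n => #|X| <= n)).
- by rewrite cards0.
- move=> X1 n1 X2 n2 h1 h2; rewrite cardsU; lia.
- by [].
Qed.

Lemma nbr_le x : #|[set y | adj b r x y]| <= D.
Proof. exact: (@leq_bigmax _ (fun x => #|[set y | adj b r x y]|) x). Qed.

Lemma reddegR_le (P : {set {set T}}) U : trivIset P ->
  reddeg br rr P U <= maxn (reddeg b r P U) (D ^ 2).
Proof.
move=> /trivIsetP tP.
case: (boolP [exists W in P, (W != U) && qred br rr U W && ~~ qred b r U W]).
- move=> /existsP[W /andP[WP /andP[/andP[WU qR] nq]]].
  have qR' := qR; rewrite qredRE in qR'.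
  move/existsP: qR' => [u0 /andP[u0U /existsP[w0 /andP[w0W _]]]].
  have allb : forall u w, u \in U -> w \in W -> b u w.
    rewrite qredRE in qR; move: nq; rewrite /qred qR andbT negbK.
    move=> /forallP F u w uU wW.
    by move: (F u) => /implyP /(_ uU) /forallP /(_ w) /implyP /(_ wW).
  have cU : #|U| <= D.
    apply: leq_trans (nbr_le w0); apply: subset_leq_card; apply/subsetP => u uU.
    by rewrite inE /adj Hb allb.
  set N := \bigcup_(u in U) [set y | adj b r u y].
  have cN : #|N| <= D ^ 2.
    apply: (leq_trans (card_bigcup_le U (fun u => [set y | adj b r u y]))).
    have hs : \sum_(u in U) #|[set y | adj b r u y]| <= \sum_(u in U) D by apply: leq_sum => u _; apply: nbr_le.
    apply: leq_trans hs _; rewrite sum_nat_const; rewrite -/D in cU; nia.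
  set S := [set W' in P | (W' != U) && qred br rr U W'].
  pose f (W' : {set T}) := odflt w0 [pick y in W' | y \in N].
  have fP : forall W', W' \in S -> (f W' \in W') && (f W' \in N).
    move=> W'; rewrite inE => /andP[_ /andP[_]]; rewrite qredRE.
    move/existsP => [u /andP[uU /existsP[y /andP[yW ua]]]].
    rewrite /f; case: pickP => [z /andP[-> ->] //| none].
    have := none y; rewrite yW /=.
    by have -> : y \in N by apply/bigcupP; exists u => //; rewrite inE.
  have finj : {in S &, injective f}.
    move=> W1 W2 h1 h2 e; apply/eqP; apply/negPn/negP => ne.
    have h1' := h1; have h2' := h2.
    rewrite inE in h1'; rewrite inE in h2'.
    move/andP: h1' => [P1 _]; move/andP: h2' => [P2 _].
    have dj := tP W1 W2 P1 P2 ne.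
    move: (fP _ h1) (fP _ h2) => /andP[a1 _] /andP[a2 _].
    by rewrite -e (disjointFr dj a1) in a2.
  have : reddeg br rr P U <= D ^ 2.
    rewrite /reddeg -/S -(card_in_imset finj); apply: leq_trans cN.
    apply: subset_leq_card; apply/subsetP => y /imsetP[W' W'S ->].
    by case/andP: (fP _ W'S).
  lia.
- rewrite negb_exists => /forallP H.
  have : reddeg br rr P U <= reddeg b r P U.
    apply: subset_leq_card; apply/subsetP => W; rewrite !inE.
    move=> /andP[WP /andP[WU q]]; rewrite WP WU /=.
    have := H W; rewrite WP WU q /=; by rewrite negbK.
  lia.
Qed.

Lemma pwidthR_le (P : {set {set T}}) : trivIset P -> pwidth br rr P <= maxn (pwidth b r P) (D ^ 2).
Proof.
move=> tP.
apply: (big_ind2 (fun x y => x <= maxn y (D ^ 2))) => //; first by move=> *; lia.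
by move=> U _; apply: reddegR_le.
Qed.

Lemma seq_widthR_le s : is_contraction_seq s ->
  seq_width br rr s <= maxn (seq_width b r s) (D ^ 2).
Proof.
move=> cs.
apply: (big_ind2 (fun x y => x <= maxn y (D ^ 2))) => //; first by move=> *; lia.
by move=> i _; apply: pwidthR_le; apply: seq_triv.
Qed.

Lemma stww_le : stww b r <= maxn (tww b r) (D ^ 2).
Proof.
apply: (big_ind2 (fun x y => x <= maxn y (D ^ 2))) => //; first by rewrite leq_maxl.
  by move=> *; lia.
by move=> s cs; apply: seq_widthR_le.
Qed.

End Proof.

Theorem mainTheorem10 (T : finType) (b r : rel T) :
  is_trigraph b r ->
  maxdeg b r ^ 2 < stww b r ->
  stww b r = tww b r.
Proof.
move=> [Hb _ _ _ _] H.
have h1 := @tww_le T b r.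
have h2 := @stww_le T b r Hb.
lia.
Qed.
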